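(* Let $n$ be a nonnegative integer and $a,c\in\mathbb{C}$ such that all series and quotients below are defined (no lower parameter zero or a negative integer). Then \[ {}_3F_2\!\left(\left.{-n,\frac{a}{2},\frac{a+1}{2} \atop a,c}\right| 4\right) =\frac{(-1)^n(1+a-c)_n}{(c)_n}\,{}_3F_2\!\left(\left.{-\frac{n}{2},\frac{1-n}{2},1-c-n \atop c-a-n,1+a-c}\right| 4\right). \]
   Context: For $a\in\mathbb{C}$, $(a)_0=1$ and $(a)_k=a(a+1)\cdots(a+k-1)$ for $k\ge1$. The hypergeometric series is ${}_rF_s\!\left(\left.{\alpha_1,\ldots,\alpha_r\atop \beta_1,\ldots,\beta_s}\right|z\right)=\sum_{k\ge0}\frac{(\alpha_1)_k\cdots(\alpha_r)_k}{k!(\beta_1)_k\cdots(\beta_s)_k}z^k$, with no lower parameter zero or a negative integer. Since one of $-\frac n2,\frac{1-n}{2}$ is a nonpositive integer, the right-hand series terminates. *)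

(* Defs.v *)
From HB Require Import structures.
From mathcomp Require Import all_boot all_order all_algebra.
From mathcomp Require Import reals.
From mathcomp Require Import complex.
Set Implicit Arguments. Unset Strict Implicit. Unset Printing Implicit Defensive.
Import Order.TTheory GRing.Theory Num.Theory.
Local Open Scope ring_scope.

Definition poch {F : ringType} (a : F) (k : nat) : F :=
  \prod_(i < k) (a + i%:R).

Definition hg32_term {F : fieldType} (a1 a2 a3 b1 b2 z : F) (k : nat) : F :=
  (poch a1 k * poch a2 k * poch a3 k)
  / ((k`!)%:R * poch b1 k * poch b2 k) * z ^+ k.

(* Partial sum of the first N terms.  For a terminating series (all terms
   with index >= N vanish) this is the value of the series. *)
Definition hg32_sum {F : fieldType} (N : nat) (a1 a2 a3 b1 b2 z : F) : F :=
  \sum_(k < N) hg32_term a1 a2 a3 b1 b2 z k.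

Definition not_nonpos_int {F : ringType} (x : F) : Prop :=
  forall m : nat, x <> - (m%:R).

(* Main.v *)
Require Import Defs.
From HB Require Import structures.
From mathcomp Require Import all_boot all_order all_algebra.
From mathcomp Require Import reals complex.
From mathcomp Require Import ring zify.
Import Order.TTheory GRing.Theory Num.Theory.
Local Open Scope ring_scope.

Set Implicit Arguments. Unset Strict Implicit. Unset Printing Implicit Defensive.
Section Core.
Variable F : numFieldType.
Implicit Types (x y : F).

Lemma poch0 x : poch x 0 = 1.
Proof. by rewrite /poch big_ord0. Qed.

Lemma pochS x k : poch x k.+1 = poch x k * (x + k%:R).
Proof. by rewrite /poch big_ord_recr. Qed.

Lemma pochSl x k : poch x k.+1 = x * poch (x + 1) k.
Proof.
rewrite /poch big_ord_recl addr0; congr (_ * _).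
by apply: eq_bigr => i _; rewrite /= /bump /= add1n -addrA -natr1 [_ + 1]addrC.
Qed.

Lemma pochD x m k : poch x (m + k) = poch x m * poch (x + m%:R) k.
Proof.
elim: k => [|k IH]; first by rewrite addn0 poch0 mulr1.
by rewrite addnS !pochS IH natrD addrA mulrA.
Qed.

Lemma poch_negz (m k : nat) : (m < k)%N -> poch (- m%:R : F) k = 0.
Proof.
move=> mk; rewrite /poch (bigD1 (Ordinal mk)) //= addrC subrr mul0r //.
Qed.

Lemma poch_refl x k : poch x k = (-1) ^+ k * poch (- x - k%:R + 1) k.
Proof.
elim: k x => [|k IH] x; first by rewrite !poch0 expr0 mul1r.
rewrite pochS IH pochSl exprS.
have -> : - x - k.+1%:R + 1 + 1 = - x - k%:R + 1 by rewrite -natr1; ring.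
rewrite -natr1; ring.
Qed.

Lemma poch_fact (m k : nat) : poch (m%:R + 1 : F) k * (m`!)%:R = ((m + k)`!)%:R.
Proof.
elim: k => [|k IH]; first by rewrite poch0 mul1r addn0.
rewrite pochS mulrAC IH addnS factS natrM mulrC; congr (_ * _).
by rewrite -addn1 !natrD; ring.
Qed.

Lemma fact_neq0 (m : nat) : (m`!)%:R != 0 :> F.
Proof. by rewrite pnatr_eq0 -lt0n fact_gt0. Qed.

Lemma poch_dup x k : poch (x / 2%:R) k * poch ((x + 1) / 2%:R) k * 4%:R ^+ k
  = poch x (2 * k).
Proof.
have h2 : (2%:R : F) != 0 by rewrite pnatr_eq0.
elim: k => [|k IH]; first by rewrite muln0 !poch0 expr0 !mulr1.
rewrite mulnS !addSn add0n.
rewrite [poch x _]pochS [poch x _]pochS -IH !pochS exprS.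
have -> : x + (2 * k)%:R = 2%:R * (x / 2%:R + k%:R).
  by rewrite mulrDr mulrCA divff // mulr1 natrM.
have -> : x + (2 * k).+1%:R = 2%:R * ((x + 1) / 2%:R + k%:R).
  by rewrite mulrDr mulrCA divff // mulr1 -natr1 natrM; ring.
have -> : (4%:R : F) = 2%:R * 2%:R by rewrite -natrM.
ring.
Qed.


Definition cb x (m : int) : F :=
  match m with Posz k => poch (x - k%:R + 1) k / (k`!)%:R | Negz _ => 0 end.

Arguments cb : simpl never.

Lemma cb0 x : cb x 0 = 1.
Proof. by rewrite /cb -[0]/(Posz 0) /= poch0 mul1r invr1. Qed.

Lemma cb_neg x (m : int) : m < 0 -> cb x m = 0.
Proof. by case: m. Qed.

Lemma cb_pascal x (m : int) : cb (x + 1) (m + 1) = cb x (m + 1) + cb x m.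
Proof.
case: m => [k|[|k]].
- rewrite -PoszD addn1 /cb.
  have -> : x + 1 - k.+1%:R + 1 = x - k%:R + 1 by rewrite -natr1; ring.
  rewrite pochS pochSl.
  have -> : x - k.+1%:R + 1 + 1 = x - k%:R + 1 by rewrite -natr1; ring.
  rewrite factS natrM invfM.
  have hk : (k.+1%:R : F) != 0 by rewrite pnatr_eq0.
  have := fact_neq0 k => hf.
  set P := poch _ k.
  have -> : x - k%:R + 1 + k%:R = x + 1 by ring.
  have -> : x - k.+1%:R + 1 = x - k%:R by rewrite -natr1; ring.
  field.
  by rewrite hf /=; move: hk; rewrite -natr1 addrC.
- have -> : Negz 0 + 1 = 0 by rewrite NegzE addNr.
  by rewrite !cb0 /= addr0.
- have -> : Negz k.+1 + 1 = Negz k.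
    by rewrite !NegzE; lia.
  by rewrite /= addr0.
Qed.

Lemma cb_nat_zero (m k : nat) : (m < k)%N -> cb (m%:R) k = 0.
Proof.
move=> mk; rewrite /cb.
have -> : (m%:R : F) - k%:R + 1 = - (k - m.+1)%:R.
  by rewrite natrB // -natr1; ring.
rewrite poch_negz ?mul0r //.
by rewrite ltn_subrL andTb; apply: leq_ltn_trans (leq0n m) mk.
Qed.


Lemma cb_pascal' x (m : int) : cb x m = cb (x - 1) m + cb (x - 1) (m - 1).
Proof. by have := cb_pascal (x - 1) (m - 1); rewrite !subrK. Qed.

Lemma cb_key x (m : int) :
  cb (x - 1) m + cb (x - 2%:R) (m - 2%:R) = cb x m - cb (x - 2%:R) (m - 1).
Proof.
rewrite (cb_pascal' x m) (cb_pascal' (x - 1) (m - 1)).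
have -> : x - 1 - 1 = x - 2%:R by ring.
have -> : m - 1 - 1 = m - 2%:R by ring.
ring.
Qed.

Definition Lsum a B n N := \sum_(k < B) (-1) ^+ k * cb (a + (2 * k)%:R - 1) k * cb N (n%:Z - k%:Z).
Definition Rsum a B n N := (-1) ^+ n * \sum_(j < B) cb N j * cb (a + (2 * n)%:R - 1 - N - j%:R) (n%:Z - (2 * j)%:Z).

Lemma Lrec a B n N : Lsum a B n.+1 (N + 1) = Lsum a B n.+1 N + Lsum a B n N.
Proof.
rewrite /Lsum -big_split; apply: eq_bigr => k _ /=.
have -> : n.+1%:Z - k%:Z = (n%:Z - k%:Z) + 1 by lia.
by rewrite cb_pascal; ring.
Qed.

Lemma Rrec a B n N : (n.+1 < B)%N -> Rsum a B n.+1 (N + 1) = Rsum a B n.+1 N + Rsum a B n N.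
Proof.
case: B => [//|B] hB.
rewrite /Rsum.
pose X (j : nat) := a + (2 * n.+1)%:R - 1 - N - j%:R.
pose m (j : nat) : int := n.+1%:Z - (2 * j)%:Z.
have e1 : forall j : 'I_B.+1, cb (N + 1) j * cb (a + (2 * n.+1)%:R - 1 - (N + 1) - j%:R) (n.+1%:Z - (2 * j)%:Z)
   = cb N j * cb (X j - 1) (m j) + cb N (j%:Z - 1) * cb (X j - 1) (m j).
  move=> j; have -> : a + (2 * n.+1)%:R - 1 - (N + 1) - j%:R = X j - 1 by rewrite /X; ring.
  by rewrite -mulrDl; have := cb_pascal N (j%:Z - 1); rewrite subrK => ->.
rewrite (eq_bigr _ (fun j _ => e1 j)) big_split /=.
have e2 : \sum_(j < B.+1) cb N (j%:Z - 1) * cb (X j - 1) (m j)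
   = \sum_(j < B.+1) cb N j * cb (X j - 2%:R) (m j - 2%:R).
  rewrite big_ord_recl big_ord_recr /=.
  rewrite (@cb_neg N (0%:Z - 1)) // mul0r add0r.
  rewrite (@cb_neg (X B - 2%:R) (m B - 2%:R)) ?mulr0 ?addr0; last by rewrite /m; lia.
  apply: eq_bigr => i _ /=.
  have -> : (bump 0 i)%:Z - 1 = i by rewrite /bump /=; lia.
  have -> : X (bump 0 i) - 1 = X i - 2%:R by rewrite /X /bump /= -natr1; ring.
  have -> : m (bump 0 i) = m i - 2%:R by rewrite /m /bump /=; lia.
  by [].
rewrite e2.
have e3 : \sum_(j < B.+1) cb N j * cb (a + (2 * n)%:R - 1 - N - j%:R) (n%:Z - (2 * j)%:Z)
   = \sum_(j < B.+1) cb N j * cb (X j - 2%:R) (m j - 1).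
  apply: eq_bigr => j _.
  have -> : a + (2 * n)%:R - 1 - N - j%:R = X j - 2%:R by rewrite /X -natr1 !natrM; ring.
  have -> : n%:Z - (2 * j)%:Z = m j - 1 by rewrite /m; lia.
  by [].
rewrite e3.
have e4 : \sum_(j < B.+1) cb N j * cb (X j - 1) (m j) + \sum_(j < B.+1) cb N j * cb (X j - 2%:R) (m j - 2%:R)
   = \sum_(j < B.+1) cb N j * cb (X j) (m j) - \sum_(j < B.+1) cb N j * cb (X j - 2%:R) (m j - 1).
  rewrite -big_split -sumrB; apply: eq_bigr => j _.
  by rewrite /= -mulrDr -mulrBr cb_key.
rewrite e4 exprS.
rewrite /X /m.
ring.
Qed.


Definition ispoly (f : F -> F) := exists p : {poly F}, forall x, f x = p.[x].

Lemma ispoly_const c : ispoly (fun _ => c).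
Proof. by exists c%:P => x; rewrite hornerC. Qed.

Lemma ispoly_id : ispoly (fun x => x).
Proof. by exists 'X => x; rewrite hornerX. Qed.

Lemma ispoly_add f g : ispoly f -> ispoly g -> ispoly (fun x => f x + g x).
Proof. by move=> [p hp] [q hq]; exists (p + q) => x; rewrite hornerD hp hq. Qed.

Lemma ispoly_opp f : ispoly f -> ispoly (fun x => - f x).
Proof. by move=> [p hp]; exists (- p) => x; rewrite hornerN hp. Qed.

Lemma ispoly_mul f g : ispoly f -> ispoly g -> ispoly (fun x => f x * g x).
Proof. by move=> [p hp] [q hq]; exists (p * q) => x; rewrite hornerM hp hq. Qed.

Lemma ispoly_sum B (G : nat -> F -> F) :
  (forall i, ispoly (G i)) -> ispoly (fun x => \sum_(i < B) G i x).
Proof.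
move=> hG; elim: B => [|B IH].
  by exists 0 => x; rewrite big_ord0 horner0.
have := ispoly_add IH (hG B); case=> p hp; exists p => x.
by rewrite big_ord_recr /= hp.
Qed.

Lemma ispoly_prod B (G : nat -> F -> F) :
  (forall i, ispoly (G i)) -> ispoly (fun x => \prod_(i < B) G i x).
Proof.
move=> hG; elim: B => [|B IH].
  by exists 1 => x; rewrite big_ord0 hornerC.
have := ispoly_mul IH (hG B); case=> p hp; exists p => x.
by rewrite big_ord_recr /= hp.
Qed.

Lemma ispoly_poch f k : ispoly f -> ispoly (fun x => poch (f x) k).
Proof.
move=> hf; rewrite /poch.
apply: (@ispoly_prod k (fun i x => f x + i%:R)) => i.
by apply: ispoly_add => //; apply: ispoly_const.
Qed.

Lemma ispoly_cb f m : ispoly f -> ispoly (fun x => cb (f x) m).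
Proof.
move=> hf; case: m => [k|k]; last by apply: ispoly_const.
rewrite /cb; apply: ispoly_mul; last by apply: ispoly_const.
apply: ispoly_poch; apply: ispoly_add; last by apply: ispoly_const.
by apply: ispoly_add => //; apply: ispoly_const.
Qed.

Lemma ispoly_zero f : ispoly f -> (forall k : nat, f k%:R = 0) -> forall x, f x = 0.
Proof.
move=> [p hp] hz x; rewrite hp.
have [->|p0] := eqVneq p 0; first by rewrite horner0.
exfalso.
have H := @max_poly_roots _ p [seq i%:R | i <- iota 0 (size p)] p0.
have A : all (root p) [seq i%:R | i <- iota 0 (size p)].
  by apply/allP => y /mapP [i _ ->]; rewrite /root -hp hz.
have U : uniq [seq (i%:R : F) | i <- iota 0 (size p)].
  rewrite map_inj_uniq ?iota_uniq //.
  by move=> i j /eqP; rewrite eqr_nat => /eqP.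
by have := H A U; rewrite size_map size_iota ltnn.
Qed.

Lemma cb_zero (m : int) : cb 0 m = (m == 0)%:R.
Proof.
case: m => [[|k]|k].
- by rewrite cb0.
- by rewrite (cb_nat_zero (m := 0)).
- by rewrite cb_neg.
Qed.

Lemma Lsum_n0 a B N : (0 < B)%N -> Lsum a B 0 N = 1.
Proof.
case: B => [//|B] _; rewrite /Lsum big_ord_recl /= big1.
  by rewrite expr0 !cb0 !mul1r addr0.
by move=> i _; rewrite (@cb_neg N) ?mulr0 //; rewrite /bump /=; lia.
Qed.

Lemma Rsum_n0 a B N : (0 < B)%N -> Rsum a B 0 N = 1.
Proof.
case: B => [//|B] _; rewrite /Rsum big_ord_recl /= big1.
  by rewrite expr0 !cb0 !mul1r addr0.
by move=> i _; rewrite (@cb_neg _ (0%:Z - _)) ?mulr0 //; rewrite /bump /=; lia.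
Qed.


Lemma Lsum_at0 a B n : (n < B)%N -> Lsum a B n 0 = (-1) ^+ n * cb (a + (2 * n)%:R - 1) n.
Proof.
move=> hn; rewrite /Lsum (bigD1 (Ordinal hn)) //= big1 ?addr0.
  by rewrite cb_zero subrr eqxx mulr1.
move=> i /eqP hi; rewrite cb_zero.
have -> : (n%:Z - (nat_of_ord i)%:Z == 0) = false.
  apply/negbTE; rewrite subr_eq0; apply/eqP => h; apply: hi.
  by apply: val_inj => /=; case: h.
by rewrite mulr0.
Qed.

Lemma Rsum_at0 a B n : (0 < B)%N -> Rsum a B n 0 = (-1) ^+ n * cb (a + (2 * n)%:R - 1) n.
Proof.
case: B => [//|B] _; rewrite /Rsum big_ord_recl /= big1.
  rewrite cb0 mul1r addr0 subr0 subr0 muln0 subr0; done.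
by move=> i _; rewrite cb_zero /bump /= mul0r.
Qed.

Lemma core a B n N : (n < B)%N -> Lsum a B n N = Rsum a B n N.
Proof.
elim: n N => [|n IH] N hn.
  by rewrite Lsum_n0 ?Rsum_n0 //; apply: leq_ltn_trans hn.
pose D x := Lsum a B n.+1 x - Rsum a B n.+1 x.
suff : D N = 0 by move/eqP; rewrite subr_eq0 => /eqP.
have hn' : (n < B)%N by apply: ltn_trans hn.
apply: ispoly_zero.
  rewrite /D /Lsum /Rsum.
  apply: ispoly_add; last first.
    apply: ispoly_opp; apply: ispoly_mul; first exact: ispoly_const.
    apply: (@ispoly_sum B (fun j x => cb x j * cb (a + (2 * n.+1)%:R - 1 - x - j%:R) (n.+1%:Z - (2 * j)%:Z))) => j.
    apply: ispoly_mul; first exact: ispoly_cb ispoly_id.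
    apply: ispoly_cb; apply: ispoly_add; last exact: ispoly_const.
    apply: ispoly_add; first exact: ispoly_const.
    exact: ispoly_opp ispoly_id.
  apply: (@ispoly_sum B (fun k x => (-1) ^+ k * cb (a + (2 * k)%:R - 1) k * cb x (n.+1%:Z - k%:Z))) => k.
  apply: ispoly_mul; first exact: ispoly_const.
  exact: ispoly_cb ispoly_id.
elim=> [|k IHk].
  by rewrite /D Lsum_at0 // Rsum_at0 ?subrr //; apply: leq_ltn_trans hn.
rewrite -natr1 /D Lrec Rrec // (IH _ hn').
move: IHk; rewrite /D => h; rewrite -h; ring.
Qed.


Lemma poch_neq0 x k : not_nonpos_int x -> poch x k != 0.
Proof.
move=> hx; elim: k => [|k IH]; first by rewrite poch0 oner_eq0.
rewrite pochS mulf_neq0 //; apply/eqP => h; apply: (hx k).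
by apply/eqP; rewrite -subr_eq0 opprK h.
Qed.

Lemma sign_neq0 k : (-1) ^+ k != 0 :> F.
Proof. by rewrite expf_neq0 // oppr_eq0 oner_eq0. Qed.

Lemma termL a c n k : not_nonpos_int a -> not_nonpos_int c ->
  poch c n * hg32_term (- n%:R) (a / 2%:R) ((a + 1) / 2%:R) a c 4%:R k
  = n`!%:R * ((-1) ^+ k * cb (a + (2 * k)%:R - 1) k * cb (c + n%:R - 1) (n%:Z - k%:Z)).
Proof.
move=> ha hc.
have -> : hg32_term (- n%:R) (a / 2%:R) ((a + 1) / 2%:R) a c 4%:R k
   = poch (- n%:R) k * (poch (a / 2%:R) k * poch ((a + 1) / 2%:R) k * 4%:R ^+ k)
     / (k`!%:R * poch a k * poch c k) by rewrite /hg32_term; ring.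
rewrite poch_dup mul2n -addnn pochD.
case: (leqP k n) => hk; last first.
  rewrite poch_negz // (@cb_neg _ (n%:Z - k%:Z)); last by lia.
  by rewrite !(mul0r, mulr0).
have [m ->] : exists m, n = (k + m)%N by exists (n - k)%N; rewrite subnKC.
rewrite pochD (poch_refl (- (k + m)%:R)).
have -> : - - (k + m)%:R - k%:R + 1 = m%:R + 1 :> F by rewrite natrD; ring.
have -> : (k + m)%:Z - k%:Z = m by lia.
rewrite /cb /=.
have -> : a + (k + k)%:R - 1 - k%:R + 1 = a + k%:R by rewrite natrD; ring.
have -> : c + (k + m)%:R - 1 - m%:R + 1 = c + k%:R by rewrite natrD; ring.
rewrite addnC -(poch_fact m k).
have := fact_neq0 k; have := fact_neq0 m; have := poch_neq0 k ha; have := poch_neq0 k hc.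
move=> h1 h2 h3 h4.
field.
by rewrite h1 h2 h3 h4.
Qed.


Lemma termR a c n j : not_nonpos_int (c - a - n%:R) -> not_nonpos_int (1 + a - c) ->
  poch (1 + a - c) n * hg32_term (- (n%:R / 2%:R)) ((1 - n%:R) / 2%:R) (1 - c - n%:R)
      (c - a - n%:R) (1 + a - c) 4%:R j
  = n`!%:R * (cb (c + n%:R - 1) j *
      cb (a + (2 * n)%:R - 1 - (c + n%:R - 1) - j%:R) (n%:Z - (2 * j)%:Z)).
Proof.
move=> hca hy.
have hQ := poch_neq0 j hca; have hY := poch_neq0 j hy.
have -> : hg32_term (- (n%:R / 2%:R)) ((1 - n%:R) / 2%:R) (1 - c - n%:R)
      (c - a - n%:R) (1 + a - c) 4%:R j
   = (poch (- n%:R / 2%:R) j * poch ((- n%:R + 1) / 2%:R) j * 4%:R ^+ j)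
     * poch (1 - c - n%:R) j / (j`!%:R * poch (c - a - n%:R) j * poch (1 + a - c) j).
  by rewrite /hg32_term mulNr [1 - _]addrC; ring.
rewrite poch_dup.
case: (leqP (2 * j) n) => hj; last first.
  rewrite poch_negz // (@cb_neg _ (n%:Z - (2 * j)%:Z)); last by lia.
  by rewrite !(mul0r, mulr0).
have [m em] : exists m, n = (j + m + j)%N by exists (n - 2 * j)%N; lia.
have E1 : poch (- n%:R) (2 * j) = poch (m%:R + 1) (2 * j) :> F.
  rewrite poch_refl -signr_odd mul2n odd_double expr0 mul1r em; congr poch.
  rewrite -addnn !natrD; ring.
have E2 : poch (1 - c - n%:R) j = (-1) ^+ j * poch (c + n%:R - j%:R) j.
  by rewrite poch_refl; congr (_ * poch _ _); ring.
have E3 : poch (c - a - n%:R) j = (-1) ^+ j * poch (1 + a - c + (j + m)%:R) j.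
  by rewrite poch_refl; congr (_ * poch _ _); rewrite em !natrD; ring.
have E4 : cb (c + n%:R - 1) j = poch (c + n%:R - j%:R) j / j`!%:R.
  by rewrite /cb /=; congr (poch _ _ / _); ring.
have E5 : cb (a + (2 * n)%:R - 1 - (c + n%:R - 1) - j%:R) (n%:Z - (2 * j)%:Z)
    = poch (1 + a - c + j%:R) m / m`!%:R.
  have -> : n%:Z - (2 * j)%:Z = m by rewrite em; lia.
  rewrite /cb /=; congr (poch _ _ / _); rewrite em -?mul2n !natrD ?natrM; ring.
have E6 : n`!%:R = poch (m%:R + 1) (2 * j) * m`!%:R :> F.
  by rewrite poch_fact em; congr (_`!%:R); lia.
have E7 : poch (1 + a - c) n = poch (1 + a - c) j * poch (1 + a - c + j%:R) m
    * poch (1 + a - c + (j + m)%:R) j.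
  by rewrite em !pochD natrD addrA.
rewrite E1 E2 E3 E4 E5 E6 E7.
move: hQ; rewrite E3 mulf_eq0 negb_or => /andP [hs hQ].
have := fact_neq0 j; have := fact_neq0 m.
move=> h1 h2.
field.
by rewrite h1 h2 hs hQ hY.
Qed.

End Core.

Unset Implicit Arguments.
Local Open Scope complex_scope.

Theorem mainTheorem9 (R : realType) (n : nat) (a c : R[i]) :
  not_nonpos_int a -> not_nonpos_int c ->
  not_nonpos_int (c - a - n%:R) -> not_nonpos_int (1 + a - c) ->
  forall N : nat, (n < N)%N ->
  hg32_sum N (- n%:R) (a / 2%:R) ((a + 1) / 2%:R) a c 4%:R
  = ((-1) ^+ n * poch (1 + a - c) n / poch c n)
    * hg32_sum N (- (n%:R / 2%:R)) ((1 - n%:R) / 2%:R) (1 - c - n%:R)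
               (c - a - n%:R) (1 + a - c) 4%:R.
Proof.
move=> ha hc hca hy K hK.
have pc := poch_neq0 n hc.
have ss : (-1) ^+ n * (-1) ^+ n = 1 :> R[i] by rewrite -exprMn mulrNN mulr1 expr1n.
have hL : poch c n * hg32_sum K (- n%:R) (a / 2%:R) ((a + 1) / 2%:R) a c 4%:R
    = n`!%:R * Lsum a K n (c + n%:R - 1).
  rewrite /hg32_sum /Lsum !mulr_sumr; apply: eq_bigr => k _.
  by rewrite termL.
have hR : poch (1 + a - c) n * hg32_sum K (- (n%:R / 2%:R)) ((1 - n%:R) / 2%:R) (1 - c - n%:R)
               (c - a - n%:R) (1 + a - c) 4%:R
    = n`!%:R * ((-1) ^+ n * Rsum a K n (c + n%:R - 1)).
  rewrite /Rsum (mulrA ((-1) ^+ n)) ss mul1r.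
  rewrite /hg32_sum !mulr_sumr; apply: eq_bigr => j _.
  by rewrite termR.
apply: (mulfI pc); rewrite hL (core _ _ hK).
set S := hg32_sum K _ _ _ _ _ _.
have -> : poch c n * ((-1) ^+ n * poch (1 + a - c) n / poch c n * S)
   = (-1) ^+ n * (poch (1 + a - c) n * S) by field.
rewrite hR.
transitivity (n`!%:R * (((-1) ^+ n * (-1) ^+ n) * Rsum a K n (c + n%:R - 1))).
  by rewrite ss mul1r.
ring.
Qed.
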